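(* Let $X$ be a compact Hausdorff space, $\mathcal C=C(X)$ with the supremum norm, $\alpha\colon X\to X$ continuous, $\delta f=f\circ\alpha$, and $A$ a transfer operator for $(\mathcal C,\delta)$. Then for every $\varphi\in\mathcal C$ and every $\mu\in M_\delta(\mathcal C)$, \[ \lambda(\varphi)\ge \mu[\varphi]+\tau(\mu). \]
   Context: A transfer operator for $(\mathcal C,\delta)$ is a positive linear operator $A\colon\mathcal C\to\mathcal C$ with $A((\delta f)g)=f\,Ag$ for all $f,g\in\mathcal C$. $A_\varphi f=A(e^\varphi f)$ and $\lambda(\varphi)=\lim_{n\to\infty}\frac1n\ln\|A_\varphi^n\mathbf 1\|$ ($\mathbf 1$ the constant function $1$). $M(\mathcal C)$ is the set of positive linear functionals $m$ on $\mathcal C$ with $m[\mathbf 1]=1$; $M_\delta(\mathcal C)$ those with additionally $\mu[\delta f]=\mu[f]$ for all $f$. A partition of unity is a finite set $D$ of nonnegative elements of $\mathcal C$ summing to $\mathbf 1$. For $\mu\in M_\delta(\mathcal C)$: $\tau_n(\mu,D)=\sup_{m\in M(\mathcal C)}\sum_{g\in D}\mu[g]\ln\frac{m[A^ng]}{\mu[g]}$, $\tau_n(\mu)=\inf_D\tau_n(\mu,D)$ over all partitions of unity, $\tau(\mu)=\inf_{n\in\mathbb N}\tau_n(\mu)/n$; summands with $\mu[g]=0$ are set to $0$, $\ln0=-\infty$, and if some $g\in D$ has $A^ng=0$ and $\mu[g]>0$ then $\tau(\mu)=-\infty$. *)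

(* Defs.v *)
From HB Require Import structures.
From mathcomp Require Import all_boot all_order all_algebra.
From mathcomp Require Import all_classical all_reals all_analysis.
Set Implicit Arguments. Unset Strict Implicit. Unset Printing Implicit Defensive.
Import Order.TTheory GRing.Theory Num.Theory.
Import numFieldNormedType.Exports.
Local Open Scope classical_set_scope.
Local Open Scope ring_scope.

(* Operators / functionals on C(X) are
   represented by maps on X -> R, and all hypotheses are only imposed on
   continuous arguments. *)

Section Defs.
Variables (R : realType) (X : topologicalType).

Definition contfun (f : X -> R) : Prop := continuous f.

Definition supnorm (f : X -> R) : R := sup [set `|f x| | x in [set: X]].

Definition cst1 : X -> R := fun _ => 1.

Definition pos_lin_op (A : (X -> R) -> (X -> R)) : Prop :=
  [/\ (forall f, contfun f -> contfun (A f)),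
      (forall f g, contfun f -> contfun g -> A (f \+ g) = A f \+ A g),
      (forall (c : R) f, contfun f -> A (fun x => c * f x) = (fun x => c * A f x)) &
      (forall f, contfun f -> (forall x, 0 <= f x) -> forall x, 0 <= A f x)].

Definition transfer_op (alpha : X -> X) (A : (X -> R) -> (X -> R)) : Prop :=
  pos_lin_op A /\
  forall f g, contfun f -> contfun g ->
    A (fun x => f (alpha x) * g x) = (fun x => f x * A g x).

Definition Aphi (A : (X -> R) -> (X -> R)) (phi : X -> R) (f : X -> R) : X -> R :=
  A (fun x => expR (phi x) * f x).

(* lambda(phi) = lim_n (1/n) ln ||A_phi^n 1|| (extended real, ln 0 = -oo) *)
Definition lambda (A : (X -> R) -> (X -> R)) (phi : X -> R) : \bar R :=
  limn (fun n : nat =>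
    ((n%:R)^-1)%:E * lne (supnorm (iter n (Aphi A phi) cst1))%:E)%E.

Definition state (m : (X -> R) -> R) : Prop :=
  [/\ (forall f g, contfun f -> contfun g -> m (f \+ g) = m f + m g),
      (forall (c : R) f, contfun f -> m (fun x => c * f x) = c * m f),
      (forall f, contfun f -> (forall x, 0 <= f x) -> 0 <= m f) &
      m cst1 = 1].

Definition inv_state (alpha : X -> X) (mu : (X -> R) -> R) : Prop :=
  state mu /\ forall f, contfun f -> mu (f \o alpha) = mu f.

(* partition of unity: a finite set D = {g_i | i < k} (injective indexing)
   of nonnegative continuous functions summing to 1 *)
Definition partition_of_unity (k : nat) (g : 'I_k -> X -> R) : Prop :=
  [/\ injective g,
      (forall i, contfun (g i)),
      (forall i x, 0 <= g i x) &
      (forall x, \sum_(i < k) g i x = 1)].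

Definition tau_term (A : (X -> R) -> (X -> R)) (n : nat)
    (mu m : (X -> R) -> R) (g : X -> R) : \bar R :=
  if mu g == 0 then 0%E
  else ((mu g)%:E * lne (m (iter n A g) / mu g)%:E)%E.

Definition tau_nD (A : (X -> R) -> (X -> R)) (n : nat) (mu : (X -> R) -> R)
    (k : nat) (g : 'I_k -> X -> R) : \bar R :=
  ereal_sup [set (\sum_(i < k) tau_term A n mu m (g i))%E | m in state].

Definition tau_n (A : (X -> R) -> (X -> R)) (n : nat) (mu : (X -> R) -> R)
    : \bar R :=
  ereal_inf [set t | exists k (g : 'I_k -> X -> R),
                      partition_of_unity g /\ t = tau_nD A n mu g].

Definition tau (A : (X -> R) -> (X -> R)) (mu : (X -> R) -> R) : \bar R :=
  ereal_inf [set (((n.+1)%:R)^-1%:E * tau_n A n.+1 mu)%E | n in [set: nat]].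

End Defs.

(* Main.v *)
Require Import Defs.
From HB Require Import structures.
From mathcomp Require Import all_boot all_order all_algebra.
From mathcomp Require Import all_classical all_reals all_analysis.
From mathcomp Require Import ring lra.
Import Order.TTheory GRing.Theory Num.Theory.
Import numFieldNormedType.Exports.
Local Open Scope classical_set_scope.
Local Open Scope ring_scope.
Set Implicit Arguments. Unset Strict Implicit.

Lemma cM (R : realType) (X : topologicalType) (f g : X -> R) :
  continuous f -> continuous g -> continuous (fun x => f x * g x).
Proof. by move=> cf cg x; exact: (continuousM (cf x) (cg x)). Qed.
Lemma cD (R : realType) (X : topologicalType) (f g : X -> R) :
  continuous f -> continuous g -> continuous (fun x => f x + g x).
Proof. by move=> cf cg x; exact: (continuousD (cf x) (cg x)). Qed.
Lemma cC (R : realType) (X : topologicalType) (c : R) :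
  continuous (fun _ : X => c).
Proof. by move=> x; apply: cvg_cst. Qed.
Lemma cE (R : realType) (X : topologicalType) (f : X -> R) :
  continuous f -> continuous (fun x => expR (f x)).
Proof. move=> cf x; apply: continuous_comp; [exact: cf | exact: continuous_expR]. Qed.
Lemma cMin (R : realType) (X : topologicalType) (f g : X -> R) :
  continuous f -> continuous g -> continuous (fun x => Num.min (f x) (g x)).
Proof. by move=> cf cg x; apply: (continuous_min (cf x) (cg x)). Qed.
Lemma cMax (R : realType) (X : topologicalType) (f g : X -> R) :
  continuous f -> continuous g -> continuous (fun x => Num.max (f x) (g x)).
Proof. by move=> cf cg x; apply: (continuous_max (cf x) (cg x)). Qed.
Lemma cS (R : realType) (X : topologicalType) k (f : 'I_k -> X -> R) :
  (forall i, continuous (f i)) -> continuous (fun x => \sum_(i < k) f i x).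
Proof.
move=> cf; elim: k f cf => [|k IH] f cf.
  by under eq_fun do rewrite big_ord0; apply: cC.
under eq_fun do rewrite big_ord_recr /=.
apply: cD; last exact: cf.
exact: (IH (fun i => f (widen_ord (leqnSn k) i))).
Qed.
Lemma cComp (X : topologicalType) (f : X -> X) (R : realType) (g : X -> R) :
  continuous f -> continuous g -> continuous (g \o f).
Proof. by move=> cf cg x; apply: continuous_comp; [exact: cf|exact: cg]. Qed.
Lemma cB (R : realType) (X : topologicalType) (f g : X -> R) :
  continuous f -> continuous g -> continuous (fun x => f x - g x).
Proof. by move=> cf cg x; exact: (continuousB (cf x) (cg x)). Qed.


Section PL.
Context (R : realType) (X : topologicalType).
Implicit Types (P : (X -> R) -> (X -> R)) (f g : X -> R) (m : (X -> R) -> R).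

Lemma plo_add P f g : pos_lin_op P -> contfun f -> contfun g ->
  P (fun x => f x + g x) = (fun x => P f x + P g x).
Proof. by case=> _ h _ _ cf cg; exact: (h f g cf cg). Qed.

Lemma plo_scale P c f : pos_lin_op P -> contfun f ->
  P (fun x => c * f x) = (fun x => c * P f x).
Proof. by case=> _ _ h _ cf; exact: h. Qed.

Lemma plo_cont P f : pos_lin_op P -> contfun f -> contfun (P f).
Proof. by case=> h _ _ _; exact: h. Qed.

Lemma plo_pos P f : pos_lin_op P -> contfun f -> (forall x, 0 <= f x) ->
  forall x, 0 <= P f x.
Proof. by case=> _ _ _ h; exact: h. Qed.

Lemma plo_sub P f g : pos_lin_op P -> contfun f -> contfun g ->
  P (fun x => f x - g x) = (fun x => P f x - P g x).
Proof.
move=> hP cf cg.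
have -> : (fun x => f x - g x) = (fun x => f x + (-1) * g x).
  by apply: funext => x; rewrite mulN1r.
rewrite plo_add //; last by apply: cM => //; exact: cC.
rewrite plo_scale //; apply: funext => x; by rewrite mulN1r.
Qed.

Lemma plo_mono P f g : pos_lin_op P -> contfun f -> contfun g ->
  (forall x, f x <= g x) -> forall x, P f x <= P g x.
Proof.
move=> hP cf cg fg x; rewrite -subr_ge0.
have := @plo_pos P (fun x => g x - f x) hP _ _ x.
rewrite plo_sub //; apply => //; first exact: cB.
by move=> y; rewrite subr_ge0.
Qed.

Lemma plo_iter P n : pos_lin_op P -> pos_lin_op (iter n P).
Proof.
move=> hP; elim: n => [|n [c1 a1 s1 p1]] /=.
  by split => // c f _.
split.
- by move=> f cf; rewrite iterS; apply: (@plo_cont P) => //; exact: c1.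
- by move=> f g cf cg; rewrite !iterS a1 //; exact: plo_add (c1 _ cf) (c1 _ cg).
- by move=> c f cf; rewrite !iterS s1 //; exact: plo_scale (c1 _ cf).
- by move=> f cf fp x; rewrite iterS; apply: (@plo_pos P) => //; [exact: c1 | exact: p1].
Qed.

Lemma plo_sum P k (f : 'I_k -> X -> R) : pos_lin_op P ->
  (forall i, contfun (f i)) ->
  P (fun x => \sum_(i < k) f i x) = (fun x => \sum_(i < k) P (f i) x).
Proof.
move=> hP; elim: k f => [|k IH] f cf.
  have -> : (fun x : X => \sum_(i < 0) f i x) = (fun x => 0 * 0).
    by apply: funext => x; rewrite big_ord0 mulr0.
  rewrite (@plo_scale P 0 (fun _ => 0) hP); last exact: cC.
  by apply: funext => x; rewrite big_ord0 mul0r.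
have -> : (fun x => \sum_(i < k.+1) f i x) =
   (fun x => \sum_(i < k) f (widen_ord (leqnSn k) i) x + f ord_max x).
  by apply: funext => x; rewrite big_ord_recr.
have cw : contfun (fun x => \sum_(i < k) f (widen_ord (leqnSn k) i) x).
  exact: (@cS _ _ _ (fun i => f (widen_ord (leqnSn k) i)) (fun i => cf _)).
rewrite plo_add //.
rewrite IH //; apply: funext => x; by rewrite big_ord_recr.
Qed.

Lemma plo_cst0 P : pos_lin_op P -> P (fun _ => 0) = (fun _ => 0).
Proof.
move=> hP.
have -> : (fun _ : X => (0:R)) = (fun x => 0 * 0) by apply: funext => x; rewrite mulr0.
rewrite (@plo_scale P 0 (fun _ => 0) hP); last exact: cC.
by apply: funext => x; rewrite !mul0r.

Qed.

Lemma st_add m f g : state m -> contfun f -> contfun g ->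
  m (fun x => f x + g x) = m f + m g.
Proof. by case=> h _ _ _; exact: h. Qed.
Lemma st_scale m c f : state m -> contfun f -> m (fun x => c * f x) = c * m f.
Proof. by case=> _ h _ _; exact: h. Qed.
Lemma st_pos m f : state m -> contfun f -> (forall x, 0 <= f x) -> 0 <= m f.
Proof. by case=> _ _ h _; exact: h. Qed.
Lemma st_one m : state m -> m (@cst1 R X) = 1.
Proof. by case. Qed.

Lemma st_sub m f g : state m -> contfun f -> contfun g ->
  m (fun x => f x - g x) = m f - m g.
Proof.
move=> hm cf cg.
have -> : (fun x => f x - g x) = (fun x => f x + (-1) * g x).
  by apply: funext => x; rewrite mulN1r.
rewrite st_add //; last by apply: cM => //; exact: cC.
by rewrite st_scale // mulN1r.
Qed.

Lemma st_mono m f g : state m -> contfun f -> contfun g ->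
  (forall x, f x <= g x) -> m f <= m g.
Proof.
move=> hm cf cg fg; rewrite -subr_ge0 -st_sub //.
apply: st_pos => //; first exact: cB.
by move=> y; rewrite subr_ge0.
Qed.

Lemma st_cst m c : state m -> m (fun _ => c) = c.
Proof.
move=> hm.
have -> : (fun _ : X => c) = (fun x => c * @cst1 R X x).
  by apply: funext => x; rewrite /cst1 mulr1.
by rewrite st_scale ?st_one ?mulr1 //; exact: cC.
Qed.

Lemma st_sum m k (f : 'I_k -> X -> R) : state m ->
  (forall i, contfun (f i)) ->
  m (fun x => \sum_(i < k) f i x) = \sum_(i < k) m (f i).
Proof.
move=> hm; elim: k f => [|k IH] f cf.
  under eq_fun do rewrite big_ord0.
  by rewrite st_cst // big_ord0.
have -> : (fun x => \sum_(i < k.+1) f i x) =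
   (fun x => \sum_(i < k) f (widen_ord (leqnSn k) i) x + f ord_max x).
  by apply: funext => x; rewrite big_ord_recr.
have cw : contfun (fun x => \sum_(i < k) f (widen_ord (leqnSn k) i) x).
  exact: (@cS _ _ _ (fun i => f (widen_ord (leqnSn k) i)) (fun i => cf _)).
rewrite st_add //.
by rewrite IH // big_ord_recr.
Qed.

Lemma st_le m f M : state m -> contfun f -> (forall x, f x <= M) -> m f <= M.
Proof.
move=> hm cf fM; rewrite -[M](st_cst M hm); apply: st_mono => //; exact: cC.
Qed.

End PL.


Section S3.
Context (R : realType) (X : topologicalType).
Implicit Types (P A : (X -> R) -> (X -> R)) (f g : X -> R) (m : (X -> R) -> R).

Definition Snf (alpha : X -> X) (phi : X -> R) n : X -> R :=
  fun x => \sum_(k < n) phi (iter k alpha x).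

Lemma Snf_cont alpha phi n : continuous alpha -> continuous phi ->
  continuous (Snf alpha phi n).
Proof.
move=> ca cp.
have ck : forall j, continuous (iter j alpha).
  elim=> [|k IH]; first by move=> x; exact: cvg_id.
  have -> : iter k.+1 alpha = alpha \o iter k alpha by apply: funext.
  by move=> x; apply: continuous_comp; [exact: IH | exact: ca].
apply: (@cS _ _ _ (fun k x => phi (iter k alpha x))) => k.
by move=> x; apply: continuous_comp; [exact: ck | exact: cp].
Qed.

Lemma SnfS alpha phi n x :
  Snf alpha phi n.+1 x = phi x + Snf alpha phi n (alpha x).
Proof.
rewrite /Snf big_ord_recl /=; congr (_ + _).
by apply: eq_bigr => i _; rewrite add0n -iterS iterSr.
Qed.

Lemma iter_Aphi alpha A phi n f : transfer_op alpha A -> continuous alpha ->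
  continuous phi -> contfun f ->
  iter n (Aphi A phi) f = iter n A (fun x => expR (Snf alpha phi n x) * f x).
Proof.
move=> [hA htr] ca cp; elim: n f => [|n IH] f cf.
  by apply: funext => x; rewrite /Snf /= big_ord0 expR0 mul1r.
have cB : contfun (Aphi A phi f).
  by apply: (plo_cont hA); apply: cM => //; exact: cE.
rewrite iterSr IH //.
have cSn := @Snf_cont alpha phi n ca cp.
have -> : (fun x => expR (Snf alpha phi n x) * Aphi A phi f x) =
    A (fun x => expR (Snf alpha phi n (alpha x)) * (expR (phi x) * f x)).
  rewrite /Aphi.
  have := htr (fun x => expR (Snf alpha phi n x)) (fun x => expR (phi x) * f x).
  by move=> -> //; [exact: cE | apply: cM => //; exact: cE].
rewrite -iterSr; congr (iter _ _ _); apply: funext => x.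
by rewrite SnfS expRD mulrA [expR (phi x) * _]mulrC.
Qed.

Lemma mu_Snf alpha phi mu n : inv_state alpha mu -> continuous alpha ->
  continuous phi -> mu (Snf alpha phi n) = n%:R * mu phi.
Proof.
move=> [hs hinv] ca cp; elim: n => [|n IH].
  rewrite mul0r; have -> : Snf alpha phi 0 = (fun _ => 0).
    by apply: funext => x; rewrite /Snf big_ord0.
  by rewrite st_cst.
have -> : Snf alpha phi n.+1 = (fun x => phi x + (Snf alpha phi n \o alpha) x).
  by apply: funext => x; rewrite SnfS.
rewrite st_add //; last by apply: cComp => //; exact: Snf_cont.
by rewrite hinv ?IH ?mulrSr ?mulrDl ?mul1r 1?addrC //; exact: Snf_cont.
Qed.

Lemma cont_bounded f : compact [set: X] -> continuous f ->
  exists M, forall x, `|f x| <= M.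
Proof.
move=> hc cf.
have : compact (f @` [set: X]).
  by apply: continuous_compact => //; exact: continuous_subspaceT.
move=> /compact_bounded [M0 [_ HM]].
exists (M0 + 1) => x; apply: (HM (M0 + 1)); first by rewrite ltrDl.
by exists x.
Qed.

Lemma nonempty_of_state m : state m -> exists x : X, True.
Proof.
move=> hm; apply: contrapT => hne.
have e : @cst1 R X = (fun _ => 0).
  by apply: funext => x; exfalso; apply: hne; exists x.
by have := st_one hm; rewrite e st_cst // => /eqP; rewrite eq_sym oner_eq0.
Qed.

Lemma sn_ge f x : compact [set: X] -> continuous f -> `|f x| <= supnorm f.
Proof.
move=> hc cf; have [M hM] := cont_bounded hc cf.
apply: ub_le_sup; last by exists x.
by exists M => _ [y _ <-].
Qed.

Lemma sn_le f c : (exists x : X, True) -> (forall x, `|f x| <= c) -> supnorm f <= c.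
Proof.
move=> [x0 _] hf; apply: ge_sup; first by exists `|f x0|, x0.
by move=> _ [y _ <-].
Qed.

Lemma sn_ge0 f : compact [set: X] -> (exists x : X, True) -> continuous f -> 0 <= supnorm f.
Proof.
move=> hc [x _] cf; exact: le_trans (normr_ge0 (f x)) (sn_ge x hc cf).
Qed.

End S3.


Lemma jensen_ln (R : realType) k (w a : 'I_k -> R) :
  (forall i, 0 <= w i) -> \sum_(i < k) w i = 1 -> (forall i, 0 <= a i) ->
  (forall i, w i != 0 -> 0 < a i) -> 0 < \sum_(i < k) a i ->
  \sum_(i < k) w i * ln (a i / w i) <= ln (\sum_(i < k) a i).
Proof.
move=> w0 w1 a0 wa; set S := \sum_(i < k) a i => S0.
have pt i : w i * ln (a i / w i) <= a i / S - w i + w i * ln S.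
  have [->|wn0] := eqVneq (w i) 0.
    by rewrite !mul0r subr0 addr0 divr_ge0 // ltW.
  have wp : 0 < w i by rewrite lt0r wn0 w0.
  have ap := wa i wn0.
  have xp : 0 < a i / (w i * S) by rewrite divr_gt0 // mulr_gt0.
  have -> : a i / w i = a i / (w i * S) * S.
    by rewrite invfM mulrA -mulrA mulVf ?mulr1 // gt_eqF.
  rewrite lnM ?posrE // mulrDr lerD2r.
  have h : ln (a i / (w i * S)) <= a i / (w i * S) - 1.
    have := @le_ln1Dx R (a i / (w i * S) - 1).
    rewrite [1 + _]addrC subrK; apply.
    by rewrite ltrBrDr addrC subrr.
  apply: le_trans (ler_wpM2l (ltW wp) h) _.
  rewrite mulrBr mulr1 lerD2r.
  rewrite le_eqVlt; apply/orP; left; apply/eqP; field; rewrite ?wn0 // gt_eqF //.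
apply: le_trans (ler_sum _ (fun i _ => pt i)) _.
rewrite big_split /= big_split /= sumrN -mulr_suml -mulr_suml w1 mul1r.
by rewrite mulfV ?subrr ?add0r // gt_eqF.
Qed.


Section S5.
Context (R : realType) (X : topologicalType).
Implicit Types (P A : (X -> R) -> (X -> R)) (f g : X -> R) (m : (X -> R) -> R).

Lemma Aphi_plo A phi : pos_lin_op A -> continuous phi -> pos_lin_op (Aphi A phi).
Proof.
move=> hA cp; have ce := cE cp.
split; rewrite /Aphi.
- by move=> f cf; apply: (plo_cont hA); exact: cM.
- move=> f g cf cg.
  have -> : (fun x => expR (phi x) * (f \+ g)%R x) =
     (fun x => expR (phi x) * f x + expR (phi x) * g x).
    by apply: funext => x; rewrite /= mulrDr.
  by rewrite plo_add //; exact: cM.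
- move=> c f cf; rewrite -plo_scale //; last exact: cM.
  by congr A; apply: funext => x; rewrite mulrCA.
- move=> f cf fp; apply: (plo_pos hA); first exact: cM.
  by move=> x; rewrite mulr_ge0 // expR_ge0.
Qed.

Lemma submult P n k : pos_lin_op P -> compact [set: X] -> (exists x : X, True) ->
  supnorm (iter (n + k) P (@cst1 R X)) <=
  supnorm (iter n P (@cst1 R X)) * supnorm (iter k P (@cst1 R X)).
Proof.
move=> hP hc hne.
have c1 : contfun (@cst1 R X) by exact: cC.
have [ci li si pi] := plo_iter n hP.
have [ck lk sk pk] := plo_iter k hP.
set u := iter k P (@cst1 R X).
have cu : contfun u by exact: ck.
have u0 x : 0 <= u x by apply: pk => // y; rewrite /cst1 ler01.
have su0 : 0 <= supnorm u by exact: sn_ge0.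
apply: sn_le => // x.
have e : iter (n + k) P (@cst1 R X) x = iter n P u x by rewrite /u -iterD.
rewrite e ger0_norm; last by apply: pi.
have h1 : iter n P u x <= iter n P (fun y => supnorm u * @cst1 R X y) x.
  have cs : contfun (fun y => supnorm u * @cst1 R X y) by apply: cM; [exact: cC | exact: c1].
  apply: (@plo_mono _ _ (iter n P) u _ (plo_iter n hP) cu cs) => y.
  by rewrite /cst1 mulr1 -[u y]ger0_norm //; exact: sn_ge.
apply: le_trans h1 _; rewrite si // mulrC ler_wpM2r //.
apply: le_trans (real_ler_norm _) _; first exact: num_real.
exact: sn_ge _ hc (ci _ c1).
Qed.

End S5.


Section S6.
Context (R : realType) (X : topologicalType).
Implicit Types (P A : (X -> R) -> (X -> R)) (f : X -> R) (m mu : (X -> R) -> R).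

Lemma key_bound alpha A phi mu m n k (g : 'I_k -> X -> R) (c : 'I_k -> R) :
  transfer_op alpha A -> continuous alpha -> continuous phi -> state mu -> state m ->
  (forall i, contfun (g i)) -> (forall i x, 0 <= g i x) ->
  (forall x, \sum_(i < k) g i x = 1) ->
  (forall i x, c i * g i x <= Snf alpha phi n x * g i x) ->
  (\sum_(i < k) tau_term A n mu m (g i) <=
     lne (m (iter n (Aphi A phi) (@cst1 R X)))%:E
       - (\sum_(i < k) c i * mu (g i))%:E)%E.
Proof.
move=> htr ca cp hmu hm cg g0 g1 hc.
have [hA _] := htr.
set B := Aphi A phi.
have hB : pos_lin_op B := Aphi_plo hA cp.
have [Bc _ _ Bp] := plo_iter n hB.
have hAn := plo_iter n hA.
have [Ac _ _ Ap] := hAn.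
set w := fun i => mu (g i).
have w0 i : 0 <= w i by apply: (st_pos hmu (cg i) (g0 i)).
have ecst : @cst1 R X = (fun x => \sum_(i < k) g i x).
  by apply: funext => x; rewrite g1.
have wsum : \sum_(i < k) w i = 1.
  by rewrite /w -st_sum // -ecst st_one.
set a := fun i => m (iter n B (g i)).
have a0 i : 0 <= a i by apply: (st_pos hm (Bc _ (cg i)) (Bp _ (cg i) (g0 i))).
set b := fun i => m (iter n A (g i)).
have b0 i : 0 <= b i by apply: (st_pos hm (Ac _ (cg i)) (Ap _ (cg i) (g0 i))).
have cSn := @Snf_cont _ _ alpha phi n ca cp.
have hab i : expR (c i) * b i <= a i.
  rewrite /a /b /B (iter_Aphi n htr ca cp (cg i)) -st_scale //; last exact: Ac.
  have cec : contfun (fun x => expR (c i) * g i x) by apply: cM; [exact: cC|exact: cg].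
  have ceS : contfun (fun x => expR (Snf alpha phi n x) * g i x) by apply: cM; [exact: cE|exact: cg].
  rewrite -(plo_scale _ hAn) //.
  apply: st_mono => //; [exact: Ac | exact: Ac |].
  apply: (plo_mono hAn) => // x.
  have [gx0|gxn0] := eqVneq (g i x) 0; first by rewrite gx0 !mulr0.
  have gxp : 0 < g i x by rewrite lt0r gxn0 g0.
  rewrite ler_pM2r // ler_expR -(ler_pM2r gxp); exact: hc.
have hS : m (iter n B (@cst1 R X)) = \sum_(i < k) a i.
  rewrite ecst (plo_sum (plo_iter n hB)) // st_sum //.
  by move=> i; apply: Bc.
have [i0 wi0] : exists i, w i != 0.
  apply: contrapT => hn.
  have : \sum_(i < k) w i = 0.
    by apply: big1 => i _; apply/eqP; apply: contrapT => h; apply: hn; exists i; apply/negP.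
  by rewrite wsum => /eqP; rewrite oner_eq0.
case: (pselect (exists i, w i != 0 /\ a i = 0)) => [[i [wi ai]]|hno].
  have bi : b i = 0.
    apply/eqP; rewrite eq_le b0 andbT.
    by rewrite -(ler_pM2l (expR_gt0 (c i))) mulr0 -ai hab.
  rewrite (bigD1 i) //= /tau_term -/(w i) -/(b i) (negbTE wi) bi mul0r.
  by rewrite le0_lneNy // gt0_muleNy ?addNye ?leNye // lte_fin lt0r wi w0.
have wa j : w j != 0 -> 0 < a j.
  move=> wj; rewrite lt0r a0 andbT; apply/eqP => aj; apply: hno; by exists j.
have Sp : 0 < \sum_(i < k) a i.
  apply: lt_le_trans (wa _ wi0) _.
  rewrite (bigD1 i0) //= lerDl; apply: sumr_ge0 => j _; exact: a0.
apply: (@le_trans _ _ (\sum_(i < k) (w i * ln (a i / w i) - c i * w i)%:E)).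
  apply: lee_sum => i _; rewrite /tau_term -/(w i).
  have [wi|wi] := eqVneq (w i) 0.
    by rewrite wi mul0r mulr0 subrr.
  have wp : 0 < w i by rewrite lt0r wi w0.
  idtac.
  have [bi|bi] := eqVneq (b i) 0.
    by rewrite -/(b i) bi mul0r le0_lneNy // gt0_muleNy ?leNye // lte_fin ?invr_gt0.
  have bp : 0 < b i by rewrite lt0r bi b0.
  rewrite -/(b i) lne_EFin ?divr_gt0 // -EFinM lee_fin.
  have h : ln (b i / w i) + c i <= ln (a i / w i).
    have e1 : ln (b i / w i) + c i = ln (expR (c i) * b i / w i).
      by rewrite -mulrA [in RHS]lnM ?posrE ?expR_gt0 ?divr_gt0 // expRK addrC.
    rewrite e1 ler_ln ?posrE ?divr_gt0 ?mulr_gt0 ?expR_gt0 ?wa //.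
    by rewrite ler_pM2r ?invr_gt0 // hab.
  have h2 : ln (b i / w i) <= ln (a i / w i) - c i by rewrite lerBrDr.
  by apply: le_trans (ler_wpM2l (ltW wp) h2) _; rewrite mulrBr [w i * c i]mulrC.
rewrite sumEFin hS lne_EFin // -EFinB lee_fin sumrB lerB //.
exact: jensen_ln.
Qed.

End S6.


Section Clamp.
Context (R : realType).
Definition clamp (s : R) : R := Num.min 1 (Num.max 0 s).

Lemma clamp_ge0 s : 0 <= clamp s.
Proof. by rewrite /clamp le_min ler01 le_max lexx. Qed.
Lemma clamp_le1 s : clamp s <= 1.
Proof. by rewrite /clamp ge_min lexx. Qed.
Lemma clamp_gt0 s : 0 < clamp s -> 0 < s.
Proof. by rewrite /clamp lt_min lt_max ltxx /= => /andP[]. Qed.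
Lemma clamp_lt1 s : clamp s < 1 -> s < 1.
Proof. by rewrite /clamp gt_min ltxx /= gt_max => /andP[]. Qed.
Lemma clamp_mono s t : s <= t -> clamp s <= clamp t.
Proof.
by move=> st; rewrite /clamp le_min2 // le_max2.
Qed.
End Clamp.

Section S7.
Context (R : realType) (X : topologicalType).
Implicit Types (f : X -> R) (m mu : (X -> R) -> R).

Lemma exists_part mu (psi : X -> R) (M delta : R) (K : nat) :
  state mu -> continuous psi -> (forall x, `|psi x| <= M) -> 0 < delta ->
  2 * M < K%:R * delta ->
  exists k (g : 'I_k -> X -> R) (c : 'I_k -> R),
   [/\ (forall i, contfun (g i)), (forall i x, 0 <= g i x),
       (forall x, \sum_(i < k) g i x = 1),
       (forall i x, c i * g i x <= psi x * g i x) &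
       mu psi - 2 * delta <= \sum_(i < k) c i * mu (g i)].
Proof.
move=> hmu cpsi hM dp hK.
have M0 : 0 <= M.
  by case: (nonempty_of_state hmu) => x _; exact: le_trans (normr_ge0 _) (hM x).
have K0 : (0 < K)%N.
  rewrite lt0n; apply/negP => /eqP K0; move: hK; rewrite K0 mul0r; lra.
set tt : nat -> R := fun j => - M + (j%:R - 1) * delta.
set Rf : nat -> R -> R := fun j s =>
  if j == 0%N then 1 else if (K <= j)%N then 0 else clamp ((s - tt j) / delta).
have Rf01 j s : 0 <= Rf j s <= 1.
  rewrite /Rf; case: eqP => _; first by rewrite ler01 lexx.
  case: leqP => _; first by rewrite lexx ler01.
  by rewrite clamp_ge0 clamp_le1.
have Rfdec j s : Rf j.+1 s <= Rf j s.
  rewrite /Rf /=; case: eqP => [->|_].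
    by case: leqP => _; [exact: ler01 | exact: clamp_le1].
  case: (leqP K j.+1) => hj; first by case: leqP => _; [exact: lexx | exact: clamp_ge0].
  rewrite leqNgt (ltn_trans (ltnSn j) hj) /=.
  apply: clamp_mono; rewrite ler_pM2r ?invr_gt0 // /tt -natr1; nra.
have cRf j : continuous (fun x => Rf j (psi x)).
  rewrite /Rf; case: eqP => _; first exact: cC.
  case: leqP => _; first exact: cC.
  apply: cMin; first exact: cC.
  apply: cMax; first exact: cC.
  by apply: cM; [apply: cB => //; exact: cC | exact: cC].
set g : 'I_K -> X -> R := fun j x => Rf j (psi x) - Rf j.+1 (psi x).
set c : 'I_K -> R := fun j => tt j.
have cg i : contfun (g i) by apply: cB; exact: cRf.
have g0 i x : 0 <= g i x by rewrite /g subr_ge0.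
have g1 x : \sum_(i < K) g i x = 1.
  rewrite /g -(big_mkord xpredT (fun j => Rf j (psi x) - Rf j.+1 (psi x))).
  rewrite -[LHS]opprK -sumrN.
  under eq_bigr do rewrite opprB.
  rewrite telescope_sumr // /Rf eqxx leqnn /=.
  by case: eqP => [K00|_]; [move: K0; rewrite K00 | rewrite sub0r opprK].
have hpos i x : g i x != 0 -> c i <= psi x /\ psi x <= c i + 2 * delta.
  move=> gn0.
  have gp : Rf i.+1 (psi x) < Rf i (psi x).
    by rewrite -subr_gt0 lt0r gn0 g0.
  split.
    have : 0 < Rf i (psi x) by apply: le_lt_trans gp; case/andP: (Rf01 i.+1 (psi x)).
    rewrite /c /Rf /tt; case: eqP => [->|_].
      move=> _; have := hM x; rewrite ler_norml => /andP[h _]; rewrite sub0r; lra.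
    case: leqP => [_|_]; first by rewrite ltxx.
    by move/clamp_gt0; rewrite pmulr_lgt0 ?invr_gt0 // subr_gt0 => /ltW.
  have : Rf i.+1 (psi x) < 1 by apply: lt_le_trans gp _; case/andP: (Rf01 i (psi x)).
  rewrite /c /Rf /tt /=; case: leqP => hi.
    move=> _; have eK : K = i.+1 by apply/eqP; rewrite eqn_leq hi ltn_ord.
    have := hM x; rewrite ler_norml => /andP[_ h].
    have eKR : (K%:R : R) = i%:R + 1 by rewrite natr1 -eK.
    move: hK; rewrite eKR => hK; nra.
  move/clamp_lt1; rewrite ltr_pdivrMr // mul1r ltrBlDr => h.
  rewrite -natr1 in h; apply: ltW; nra.
exists K, g, c; split => //.
- move=> i x; have [->|gn0] := eqVneq (g i x) 0; first by rewrite !mulr0.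
  have [h _] := hpos i x gn0; rewrite ler_pM2r // lt0r gn0 g0 //.
- have cgi : forall i, contfun (fun x => c i * g i x).
    by move=> i; apply: cM; [exact: cC | exact: cg].
  have cS2 : contfun (fun x => \sum_(i < K) c i * g i x).
    exact: (@cS _ _ _ (fun i x => c i * g i x)).
  have -> : \sum_(i < K) c i * mu (g i) = mu (fun x => \sum_(i < K) c i * g i x).
    rewrite (@st_sum _ _ mu _ (fun i x => c i * g i x)) //.
    by apply: eq_bigr => i _; rewrite st_scale.
  have cpd : contfun (fun x => psi x - 2 * delta) by apply: cB => //; exact: cC.
  have -> : mu psi - 2 * delta = mu (fun x => psi x - 2 * delta).
    by rewrite st_sub //; [rewrite st_cst | exact: cC].
  apply: st_mono => // x.
  have -> : psi x - 2 * delta = \sum_(i < K) (psi x - 2 * delta) * g i x.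
    by rewrite -mulr_sumr g1 mulr1.
  apply: ler_sum => i _.
  have [->|gn0] := eqVneq (g i x) 0; first by rewrite !mulr0.
  have [_ h] := hpos i x gn0; rewrite ler_pM2r ?lt0r ?gn0 ?g0 //; lra.
Qed.
End S7.


Section S8.
Context (R : realType) (X : topologicalType).
Implicit Types (f : X -> R) (m mu : (X -> R) -> R).

Definition Good mu (psi : X -> R) (eta : R) k (g : 'I_k -> X -> R) (c : 'I_k -> R) :=
  [/\ (forall i, contfun (g i)), (forall i x, 0 <= g i x),
       (forall x, \sum_(i < k) g i x = 1),
       (forall i x, c i * g i x <= psi x * g i x) &
       eta <= \sum_(i < k) c i * mu (g i)].

Lemma dedupe_aux mu psi eta n : state mu -> forall k, (k <= n)%N ->
  forall g c, @Good mu psi eta k g c ->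
  exists k' (g' : 'I_k' -> X -> R) c', injective g' /\ Good mu psi eta g' c'.
Proof.
move=> hmu; elim: n => [|n IH] k hk g c hG.
  exists k, g, c; split => // i; exfalso.
  by have := leq_trans (ltn_ord i) hk; rewrite ltn0.
case: (pselect (injective g)) => [hinj|hinj]; first by exists k, g, c.
have [i [j [eij nij]]] : exists i j, g i = g j /\ j != i.
  apply: contrapT => hne; apply: hinj => i j e; apply/eqP; apply: contrapT => ne.
  by apply: hne; exists i, j; split => //; apply/negP; rewrite eq_sym.
clear hinj; move: hk g c hG i j eij nij; case: k => [|k'] hk g c hG i j eij nij; first by have := ltn_ord i.
have [l0 il0 _] := unlift_some nij.
set h : 'I_k' -> X -> R := fun l => if l == l0 then (fun x => g i x + g j x) else g (lift j l).
set cc : 'I_k' -> R := fun l => if l == l0 then Num.max (c i) (c j) else c (lift j l).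
case: hG => cg g0 g1 hc heta.
apply: (IH k' _ h cc) => //.
split.
- by move=> l; rewrite /h; case: eqP => _; [apply: cD; exact: cg | exact: cg].
- by move=> l x; rewrite /h; case: eqP => _; [rewrite addr_ge0 | exact: g0].
- move=> x; rewrite (bigD1 l0) //= /h eqxx.
  rewrite -(g1 x) (bigD1_ord j) //= [in RHS](bigD1 l0) //= -il0.
  rewrite [in RHS]addrCA addrA; congr (_ + _); apply: eq_bigr => l /negbTE ->.
  by [].
- move=> l x; rewrite /h /cc; case: eqP => _; last exact: hc.
  rewrite !mulrDr; apply: lerD.
    by case: (leP (c i) (c j)) => _; [rewrite eij | idtac]; exact: hc.
  by case: (leP (c i) (c j)) => _; [idtac | rewrite -eij]; exact: hc.
- apply: le_trans heta _.
  rewrite (bigD1_ord j) //= (bigD1 l0) //= -il0 [in X in _ <= X](bigD1 l0) //=.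
  rewrite /h /cc eqxx addrA; apply: lerD; last first.
    by rewrite le_eqVlt; apply/orP; left; apply/eqP; apply: eq_bigr => l /negbTE ->.
  rewrite st_add // mulrDr addrC; apply: lerD.
    by apply: ler_wpM2r; [exact: st_pos | rewrite le_max lexx].
  by apply: ler_wpM2r; [exact: st_pos | rewrite le_max lexx orbT].
Qed.

Lemma dedupe mu psi eta k g c : state mu -> @Good mu psi eta k g c ->
  exists k' (g' : 'I_k' -> X -> R) c', injective g' /\ Good mu psi eta g' c'.
Proof. by move=> hmu; apply: (dedupe_aux hmu (leqnn k)). Qed.

End S8.


Lemma lne_mono (R : realType) (r s : R) : r <= s -> (lne r%:E <= lne s%:E)%E.
Proof.
move=> rs; have [r0|r0] := lerP r 0; first by rewrite le0_lneNy ?leNye // lee_fin.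
rewrite !lne_EFin ?(lt_le_trans r0) // lee_fin ler_ln ?posrE ?(lt_le_trans r0) //.
Qed.

Section S9.
Context (R : realType) (X : topologicalType).

Lemma claim1 (hcomp : compact [set: X])
  (alpha : X -> X) (halpha : continuous alpha)
  (A : (X -> R) -> (X -> R)) (hA : transfer_op alpha A)
  (phi : X -> R) (hphi : continuous phi)
  (mu : (X -> R) -> R) (hmu : inv_state alpha mu) n (delta : R) :
  0 < delta ->
  (tau_n A n mu <= lne (supnorm (iter n (Aphi A phi) (@cst1 R X)))%:E
                   - (mu (Snf alpha phi n) - 2 * delta)%:E)%E.
Proof.
move=> dp; have [hs _] := hmu.
set psi := Snf alpha phi n.
have cpsi : continuous psi := @Snf_cont _ _ alpha phi n halpha hphi.
have [M hM] := cont_bounded hcomp cpsi.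
have hK := truncnS_gt (2 * M / delta).
set K := (Num.Def.trunc (2 * M / delta)).+1 in hK.
have hK' : 2 * M < K%:R * delta.
  by move: hK; rewrite ltr_pdivrMr.
have [k [g [c hG]]] := exists_part hs cpsi hM dp hK'.
have [k' [g' [c' [ginj [cg g0 g1 hc heta]]]]] := dedupe hs hG.
have h1 : (tau_n A n mu <= tau_nD A n mu g')%E.
  by apply: ereal_inf_lbound; exists k', g'; split.
apply: le_trans h1 _.
apply: ge_ereal_sup => _ [m hm <-].
apply: le_trans (key_bound hA halpha hphi hs hm cg g0 g1 hc) _.
apply: leeD; last by rewrite leeN2 lee_fin.
have hB := plo_iter n (Aphi_plo (proj1 hA) hphi).
have cf : contfun (iter n (Aphi A phi) (@cst1 R X)).
  by case: hB => h _ _ _; apply: h; exact: cC.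
apply: lne_mono; apply: st_le => // x.
apply: le_trans (real_ler_norm _) _; first exact: num_real.
exact: sn_ge.
Qed.


Lemma claim2 (hcomp : compact [set: X])
  (alpha : X -> X) (halpha : continuous alpha)
  (A : (X -> R) -> (X -> R)) (hA : transfer_op alpha A)
  (phi : X -> R) (hphi : continuous phi)
  (mu : (X -> R) -> R) (hmu : inv_state alpha mu) n :
  ((mu phi)%:E + tau A mu <=
    ((n.+1%:R)^-1)%:E * lne (supnorm (iter n.+1 (Aphi A phi) (@cst1 R X)))%:E)%E.
Proof.
have [hs _] := hmu.
have hne := nonempty_of_state hs.
set N := n.+1.
have Np : 0 < (N%:R : R) by rewrite ltr0n.
have ht : (tau A mu <= ((N%:R)^-1)%:E * tau_n A N mu)%E.
  by apply: ereal_inf_lbound; exists n.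
set a := supnorm _.
have a0 : 0 <= a.
  apply: sn_ge0 => //.
  have [h _ _ _] := plo_iter N (Aphi_plo (proj1 hA) hphi); apply: h; exact: cC.
have [a00|ap] := eqVneq a 0.
  have := claim1 hcomp halpha hA hphi hmu N ltr01.
  rewrite -/a a00 le0_lneNy // addNye leeNy_eq => /eqP tn.
  move: ht; rewrite tn gt0_muleNy ?lte_fin ?invr_gt0 // leeNy_eq => /eqP ->.
  by rewrite addeNy leNye.
have apos : 0 < a by rewrite lt0r ap a0.
rewrite lne_EFin // -EFinM.
apply/lee_addgt0Pr => e e0.
set delta := e * N%:R / 2.
have dp : 0 < delta by rewrite /delta divr_gt0 // mulr_gt0.
have := claim1 hcomp halpha hA hphi hmu N dp.
rewrite -/a lne_EFin // (mu_Snf N hmu halpha hphi) -EFinB => h1.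
have := le_trans ht (lee_wpmul2l _ h1).
rewrite -EFinM lee_fin invr_ge0 ler0n => /(_ isT) h2.
have h3 := leeD (lexx (mu phi)%:E) h2.
apply: le_trans h3 _; rewrite -!EFinD lee_fin le_eqVlt; apply/orP; left; apply/eqP.
rewrite /delta; field; rewrite gt_eqF //.
Qed.

End S9.


Lemma fek_ineq (R : realType) (Un s w n p C : R) : 0 < n -> 0 < p -> w <= n ->
  n < w + p -> Un <= w * s + C -> Un / n <= s + (`|s * p| + C) / n.
Proof.
move=> n0 p0 wn nw h; rewrite ler_pdivrMr // mulrDl divfK ?gt_eqF //.
case: (lerP 0 s) => hs.
  have h2 : 0 <= s * p by rewrite mulr_ge0 // ltW.
  rewrite ger0_norm //.
  have h1 : 0 <= (n - w) * s by rewrite mulr_ge0 // subr_ge0.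
  have e : w * s = n * s - (n - w) * s by ring.
  rewrite e in h; rewrite [s * n]mulrC; lra.
have sp : s * p < 0 by rewrite pmulr_llt0.
rewrite ltr0_norm //.
have h0 : 0 <= w + p - n by lra.
have h1 : (w + p - n) * s <= 0 by apply: mulr_ge0_le0 h0 (ltW hs).
have e : w * s = n * s - p * s + (w + p - n) * s by ring.
rewrite e in h; rewrite [s * n]mulrC [s * p]mulrC; lra.
Qed.

Lemma subadd_iter (R : realType) (U : nat -> R) p :
  (forall n k, U (n + k)%N <= U n + U k) ->
  forall q r, U (q * p + r)%N <= q%:R * U p + U r.
Proof.
move=> hsub; elim=> [|q IH] r; first by rewrite mul0n add0n mul0r add0r.
rewrite mulSn -addnA; apply: le_trans (hsub _ _) _.
move: (IH r); rewrite -natr1 mulrDl mul1r; lra.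
Qed.

Lemma fekete (R : realType) (a : nat -> R) : (forall n, 0 < a n) ->
  (forall n k, a (n + k)%N <= a n * a k) ->
  (fun n => (ln (a n.+1) / n.+1%:R)%:E) @ \oo -->
    ereal_inf (range (fun n => (ln (a n.+1) / n.+1%:R)%:E)).
Proof.
move=> apos asub.
set v := fun n => (ln (a n.+1) / n.+1%:R)%:E.
set U := fun n => ln (a n).
have hsub n k : U (n + k)%N <= U n + U k.
  by rewrite /U -lnM ?posrE // ler_ln ?posrE ?mulr_gt0.
apply: limn_esup_le_cvg; last by move=> n; apply: ereal_inf_lbound; exists n.
apply: le_ereal_inf_tmp => _ [N _ <-].
set p := N.+1.
have p0 : (0 < p)%N by [].
have pR : 0 < (p%:R : R) by rewrite ltr0n.
set C := \sum_(r < p) `|U r|.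
set s := U p / p%:R.
set K := `|s * p%:R| + C.
apply/lee_addgt0Pr => e e0.
have hm := truncnS_gt (K / e).
set m := Num.Def.trunc (K / e) in hm.
have le1 : (limn_esup v <= esups v m)%E.
  rewrite limn_esup_lim (cvg_lim _ (@cvg_esups_inf _ v)) //.
  by apply: ereal_inf_lbound; exists m.
apply: le_trans le1 _.
apply: ge_ereal_sup => _ [k /= mk <-].
rewrite /v -EFinD lee_fin -/(U k.+1) -/(U p) -/s.
set n := k.+1.
have nR : 0 < (n%:R : R) by rewrite ltr0n.
set q := (n %/ p)%N; set r := (n %% p)%N.
have rp : (r < p)%N by rewrite ltn_pmod.
have hn : n = (q * p + r)%N by rewrite /q /r -divn_eq.
have hU : U n <= (q * p)%:R * s + C.
  rewrite {1}hn; apply: le_trans (@subadd_iter _ U p hsub q r) _.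
  have -> : (q * p)%:R * s = q%:R * U p.
    by rewrite /s natrM; field; rewrite gt_eqF.
  rewrite lerD2l; apply: le_trans (ler_norm _) _.
  rewrite /C (bigD1 (Ordinal rp)) //= lerDl; apply: sumr_ge0 => i _; exact: normr_ge0.
have wn : ((q * p)%:R : R) <= n%:R by rewrite ler_nat [X in (_ <= X)%N]hn leq_addr.
have nw : (n%:R : R) < (q * p)%:R + p%:R.
  by rewrite -natrD ltr_nat [X in (X < _)%N]hn ltn_add2l.
have C0 : 0 <= C by apply: sumr_ge0 => i _; exact: normr_ge0.
apply: le_trans (fek_ineq nR pR wn nw hU) _.
rewrite lerD2l -/K ler_pdivrMr // -ler_pdivrMl //.
rewrite mulrC; apply: ltW; apply: lt_le_trans hm _; by rewrite ler_nat ltnS.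
Qed.


Unset Implicit Arguments. Set Strict Implicit.

Theorem lemma1p11 (R : realType) (X : topologicalType)
  (hcomp : compact [set: X]) (hhaus : hausdorff_space X)
  (alpha : X -> X) (halpha : continuous alpha)
  (A : (X -> R) -> (X -> R)) (hA : transfer_op alpha A)
  (phi : X -> R) (hphi : continuous phi)
  (mu : (X -> R) -> R) (hmu : inv_state alpha mu) :
  ((mu phi)%:E + tau A mu <= lambda A phi)%E.
Proof.
have [hs _] := hmu.
have hne := nonempty_of_state hs.
have hB := Aphi_plo (proj1 hA) hphi.
set a := fun n => supnorm (iter n (Aphi A phi) (@cst1 R X)).
have c1 : contfun (@cst1 R X) by exact: cC.
have cont n : contfun (iter n (Aphi A phi) (@cst1 R X)).
  by have [h _ _ _] := plo_iter n hB; apply: h.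
have a0 n : 0 <= a n by exact: sn_ge0 hcomp hne (cont n).
have cl2 n := claim2 hcomp halpha hA hphi hmu n.
case: (pselect (exists n, a n.+1 = 0)) => [[n hn]|hno].
  move: (cl2 n); rewrite -/(a n.+1) hn le0_lneNy // gt0_muleNy ?lte_fin ?invr_gt0 ?ltr0n //.
  by rewrite leeNy_eq => /eqP ->; rewrite leNye.
have apos n : 0 < a n.
  case: n => [|n].
    have [x _] := hne; apply: lt_le_trans (sn_ge x hcomp c1).
    by rewrite /cst1 normr1 ltr01.
  by rewrite lt0r a0 andbT; apply/eqP => h; apply: hno; exists n.
have asub n k : a (n + k)%N <= a n * a k by exact: submult.
have hf := fekete apos asub.
rewrite /lambda.
have -> : limn (fun n : nat => ((n%:R)^-1)%:E * lne (supnorm (iter n (Aphi A phi) (@cst1 R X)))%:E)%E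
   = ereal_inf (range (fun n => (ln (a n.+1) / n.+1%:R)%:E)).
  apply: cvg_lim => //; rewrite -cvg_shiftS.
  apply: cvg_trans hf; apply: near_eq_cvg; apply: nearW => n /=.
  by rewrite (lt_geF (apos n.+1)) -EFinM mulrC.
apply: le_ereal_inf_tmp => _ [n _ <-].
by move: (cl2 n); rewrite -/(a n.+1) lne_EFin // -EFinM mulrC.
Qed.
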